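(* Let $\mathcal{I}$ be a $\sigma$-ideal on $\mathbb{R}$ satisfying the standing assumptions. Let $B\subseteq\mathbb{R}$ be a Borel set with $B\notin\mathcal{I}$ and let $D\subseteq\mathbb{R}$ be a countable dense set. Then $B+D=\{b+d: b\in B, d\in D\}$ is $\mathcal{I}$-residual, i.e. $\mathbb{R}\setminus(B+D)\in\mathcal{I}$.
   Context: Standing assumptions on $\mathcal{I}$: $\mathcal{I}$ is a $\sigma$-ideal of subsets of $\mathbb{R}$ (closed under subsets and countable unions) such that: $\mathbb{R}\notin\mathcal{I}$; $x+I\in\mathcal{I}$ and $xI=\{xi:i\in I\}\in\mathcal{I}$ for all $x\in\mathbb{R}$, $I\in\mathcal{I}$; every $I\in\mathcal{I}$ is contained in a Borel set belonging to $\mathcal{I}$; and (Steinhaus property) for all Borel sets $A,B\notin\mathcal{I}$ the set $A-B=\{a-b:a\in A,b\in B\}$ has nonempty interior. A set is $\mathcal{I}$-residual if its complement belongs to $\mathcal{I}$. *)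

(* Defs.v *)
From Stdlib Require Import Reals.
Open Scope R_scope.

Definition rset := R -> Prop.

Definition subset (A B : rset) : Prop := forall x, A x -> B x.

Definition is_open (U : rset) : Prop :=
  forall x, U x -> exists eps, 0 < eps /\ forall y, Rabs (y - x) < eps -> U y.

Inductive Borel : rset -> Prop :=
| Borel_open : forall U, is_open U -> Borel U
| Borel_compl : forall A, Borel A -> Borel (fun x => ~ A x)
| Borel_cunion : forall A : nat -> rset,
    (forall n, Borel (A n)) -> Borel (fun x => exists n, A n x).

Definition translate (x : R) (A : rset) : rset := fun y => exists a, A a /\ y = x + a.
Definition scale (x : R) (A : rset) : rset := fun y => exists a, A a /\ y = x * a.
Definition set_minus_set (A B : rset) : rset :=
  fun y => exists a b, A a /\ B b /\ y = a - b.
Definition set_plus_set (A B : rset) : rset :=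
  fun y => exists a b, A a /\ B b /\ y = a + b.

Definition has_nonempty_interior (A : rset) : Prop :=
  exists x eps, 0 < eps /\ forall y, Rabs (y - x) < eps -> A y.

Definition sigma_ideal (I : rset -> Prop) : Prop :=
  I (fun _ => False) /\
  (forall A B, I A -> subset B A -> I B) /\
  (forall A : nat -> rset, (forall n, I (A n)) -> I (fun x => exists n, A n x)).

Definition standing_assumptions (I : rset -> Prop) : Prop :=
  sigma_ideal I /\
  ~ I (fun _ => True) /\
  (forall x A, I A -> I (translate x A)) /\
  (forall x A, I A -> I (scale x A)) /\
  (forall A, I A -> exists B, Borel B /\ subset A B /\ I B) /\
  (forall A B, Borel A -> Borel B -> ~ I A -> ~ I B ->
     has_nonempty_interior (set_minus_set A B)).

Definition countable (D : rset) : Prop :=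
  exists f : nat -> R, forall d, D d -> exists n, f n = d.

Definition dense (D : rset) : Prop :=
  forall x eps, 0 < eps -> exists d, D d /\ Rabs (d - x) < eps.

Definition I_residual (I : rset -> Prop) (A : rset) : Prop := I (fun x => ~ A x).

(* Main.v *)
Require Import Defs.
From Stdlib Require Import Reals Lra Classical FunctionalExtensionality PropExtensionality.
Open Scope R_scope.

Lemma Borel_shift : forall A, Borel A -> forall d, Borel (fun y => A (y - d)).
Proof.
  induction 1 as [U HU|A HA IH|A HA IH]; intro d.
  - apply Borel_open. intros x Hx. destruct (HU _ Hx) as [e [He H]].
    exists e; split; auto. intros y Hy. apply H.
    replace (y - d - (x - d)) with (y - x) by ring. exact Hy.
  - exact (Borel_compl _ (IH d)).
  - exact (Borel_cunion (fun n y => A n (y - d)) (fun n => IH n d)).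
Qed.

Lemma Borel_ext : forall A B, (forall x, A x <-> B x) -> Borel A -> Borel B.
Proof.
  intros A B H HA.
  replace B with A; auto.
  apply functional_extensionality; intro x; apply propositional_extensionality; auto.
Qed.

Theorem mainTheorem1 (I : rset -> Prop) (B D : rset) :
  standing_assumptions I ->
  Borel B -> ~ I B ->
  countable D -> dense D ->
  I_residual I (set_plus_set B D).
Proof.
  intros [Hsig [_ [_ [_ [_ Hst]]]]] HB HIB [f Hf] Hdense.
  unfold I_residual.
  assert (HBor : Borel (fun x => ~ set_plus_set B D x)).
  { apply Borel_compl.
    apply Borel_ext with (fun y => exists n, (fun n y => D (f n) /\ B (y - f n)) n y).
    - intro y; split.
      + intros [n [Hn1 Hn2]]. exists (y - f n), (f n). repeat split; auto. ring.
      + intros [b [d [Hb [Hd Hy]]]]. destruct (Hf d Hd) as [n Hn].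
        exists n. subst. split; auto. replace (b + f n - f n) with b by ring; auto.
    - apply Borel_cunion. intro n.
      destruct (classic (D (f n))) as [Hn|Hn].
      + apply Borel_ext with (fun y => B (y - f n)).
        * intro y; tauto.
        * apply Borel_shift; auto.
      + apply Borel_ext with (fun _ : R => False).
        * intro y; tauto.
        * apply Borel_open. intros x [].
  }
  apply NNPP; intro HC.
  destruct (Hst _ _ HBor HB HC HIB) as [x [e [He Hball]]].
  destruct (Hdense x e He) as [d [Hd Hdx]].
  destruct (Hball d Hdx) as [c [b [Hc [Hb Heq]]]].
  apply Hc. exists b, d. repeat split; auto. lra.
Qed.
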